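(* Assume there are constants $\gamma_t\ge 0$ ($t=0,\dots,T-1$) with $|C_t(x)-C_t(y)|\le\gamma_t|x-y|$ for all $x,y$. Then for every $t=0,1,\dots,T-1$ and all $x'\le x$: $H_t(x)-H_t(x')\le\psi_t(x-x',x)$ and $V_t(x)-V_t(x')\le\varphi_t(x-x',x)$.
   Context: Model. Fix an integer horizon $T\ge 2$, a discount factor $\alpha\in(0,1]$, and for $t=0,\dots,T-1$: unit ordering costs $c_t\in\mathbb R$, a salvage coefficient $c_T\in\mathbb R$, setup costs $K_t\ge 0$, functions $G_t:\mathbb R\to\mathbb R$, and independent nonnegative random demands $D_0,\dots,D_{T-1}$ with right-continuous distribution functions $F_t$ and finite means; all expectations appearing are assumed finite. Put $C_t(y)=(c_t-\alpha c_{t+1})y+G_t(y)+\alpha c_{t+1}E[D_t]$. Standing assumptions: (i) each $C_t$ is convex with $C_t(y)\to+\infty$ as $|y|\to\infty$; (ii) $K_t\ge \alpha K_{t+1}$ for $t=0,\dots,T-2$. Grid construction. Fix $\theta>0$, $z_m=m\theta$, $Z_\theta=\{z_m:m\in\mathbb Z\}$, $f_t(n)=F_t(z_{n+1})-F_t(z_n)$ ($n\ge -1$). $C^m_t=\min\{y: C_t(y)=\min_x C_t(x)\}$; with $z_{n_0}<C^m_t\le z_{n_0+1}$, $S^U_t=\min\{z_m\in Z_\theta: z_m\ge C^m_t,\ C_t(z_m)>C_t(z_{n_0})+K_t\}$. $s_{T-1}$ is a point with $s_{T-1}\le C^m_{T-1}$, $C_{T-1}(s_{T-1})=C_{T-1}(C^m_{T-1})+K_{T-1}$;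 $\bar I_{T-1}=s_{T-1}$. For $t=T-2,\dots,0$: $I_t=\max\{z_m\in Z_\theta: z_m<\min(\bar I_{t+1}-\theta,C^m_t)\}$, $\bar I_t=\max\{z_m\in Z_\theta: z_m\le I_t,\ C_t(z_m)>C_t(I_t)+K_t\}+\theta$. $H_{T-1}=C_{T-1}$, $S_{T-1}=C^m_{T-1}$; $V_t(y)=H_t(S_t)+K_t$ for $y<s_t$, $V_t(y)=H_t(y)$ for $y\ge s_t$. For $t=T-2,\dots,0$: $H_t(y)=C_t(y)+\alpha\sum_{n=-1}^\infty V_{t+1}(y-z_n)f_t(n)$; $S_t=\max\{z_m\in Z_\theta: I_t\le z_m\le S^U_t,\ H_t(z_m)=\min\{H_t(z_n):z_n\in Z_\theta, I_t\le z_n\le S^U_t\}\}$; $s_t=S_t$ if $K_t=0$, else $s_t=\min\{z_m\in Z_\theta:\bar I_t\le z_m\le S_t,\ H_t(z_m)\le H_t(S_t)+K_t\}$. Estimate functions. $\psi_{T-1}(x,y)=\gamma_{T-1}x$ for all $x,y$; $\varphi_{T-1}(x,y)=0$ if $y<s_{T-1}$ and $\varphi_{T-1}(x,y)=\gamma_{T-1}x$ if $y\ge s_{T-1}$. For $t=0,\dots,T-2$: $\psi_t(x,y)=\gamma_tx$ if $y<s_{t+1}-\theta$, and otherwise $\psi_t(x,y)=\gamma_tx+\alpha\sum_{m=-1}^{n-1}\varphi_{t+1}(x,y-z_m)f_t(m)$, where $n$ is the integer with $z_{n-1}\le y-s_{t+1}<z_n$; and $\varphi_t(x,y)=0$ if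 $y<s_t$, $\varphi_t(x,y)=\psi_t(y-s_t,y)$ if $y\ge s_t$ and $y-x<s_t$, $\varphi_t(x,y)=\psi_t(x,y)$ if $y\ge s_t$ and $y-x\ge s_t$. *)

(* Defs.v *)
From Stdlib Require Import Reals ZArith.
From Coquelicot Require Import Coquelicot.
Open Scope R_scope.

Definition zg (theta : R) (m : Z) : R := IZR m * theta.
Definition on_grid (theta x : R) : Prop := exists m : Z, x = zg theta m.

Definition is_max (P : R -> Prop) (x : R) : Prop := P x /\ forall y, P y -> y <= x.
Definition is_min (P : R -> Prop) (x : R) : Prop := P x /\ forall y, P y -> x <= y.

Definition convex_fun (f : R -> R) : Prop :=
  forall x y l, 0 <= l <= 1 -> f (l * x + (1 - l) * y) <= l * f x + (1 - l) * f y.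

Definition coercive (f : R -> R) : Prop :=
  forall M : R, exists R0 : R, forall y, R0 <= Rabs y -> M <= f y.

Definition nonneg_distribution_function (F : R -> R) : Prop :=
  (forall x y, x <= y -> F x <= F y) /\
  (forall x eps, 0 < eps -> exists delta, 0 < delta /\
      forall y, x <= y < x + delta -> Rabs (F y - F x) < eps) /\
  (forall x, x < 0 -> F x = 0) /\
  (forall eps, 0 < eps -> exists M, forall x, M <= x -> Rabs (F x - 1) < eps).

(* E[D] = \int_0^oo (1 - F) for a nonnegative r.v. D with d.f. F;
   this predicate says the mean is finite and equals m *)
Definition has_mean (F : R -> R) (m : R) : Prop :=
  is_RInt_gen (fun x => 1 - F x) (at_point 0) (Rbar_locally p_infty) m.

Definition Cfun (alpha : R) (c : nat -> R) (G : nat -> R -> R) (ED : nat -> R)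
  (t : nat) (y : R) : R :=
  (c t - alpha * c (S t)) * y + G t y + alpha * c (S t) * ED t.

Definition fgrid (theta : R) (F : nat -> R -> R) (t : nat) (n : Z) : R :=
  F t (zg theta (n + 1)) - F t (zg theta n).

Definition Vfun (H : nat -> R -> R) (Sb s K : nat -> R) (t : nat) (y : R) : R :=
  if Rlt_dec y (s t) then H t (Sb t) + K t else H t y.

(* the n-th term (n = k - 1, k : nat) of sum_{n=-1}^oo V_{t+1}(y - z_n) f_t(n) *)
Definition Hterm (theta : R) (F : nat -> R -> R) (H : nat -> R -> R) (Sb s K : nat -> R)
  (t : nat) (y : R) (k : nat) : R :=
  Vfun H Sb s K (S t) (y - zg theta (Z.of_nat k - 1)) * fgrid theta F t (Z.of_nat k - 1).

(* Main.v *)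
Require Import Defs.
From Stdlib Require Import Reals ZArith.
From Coquelicot Require Import Coquelicot.
From Stdlib Require Import Lia Lra.
Open Scope R_scope.


Lemma Series_zero (a : nat -> R) : (forall n, a n = 0) -> Series a = 0.
Proof. intro Ha. rewrite (Series_ext a (fun n => 0 * a n)). rewrite Series_scal_l; ring. intro; rewrite Ha; ring. Qed.

Lemma zg_mono theta m n : 0 < theta -> (m <= n)%Z -> zg theta m <= zg theta n.
Proof. intros Ht Hmn. unfold zg. apply Rmult_le_compat_r; [lra|]. apply IZR_le; exact Hmn. Qed.

Lemma zg_m1 theta : zg theta (-1) = - theta.
Proof. unfold zg. change (IZR (-1)) with (-1). ring. Qed.

Lemma ex_minus (a b : nat -> R) : ex_series a -> ex_series b -> ex_series (fun n => a n - b n).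
Proof. intros Ha Hb. exact (ex_series_minus _ _ Ha Hb). Qed.

Lemma Series_fin (a : nat -> R) N : ex_series a -> (forall k, (N < k)%nat -> a k = 0) ->
  Series a = sum_f_R0 a N.
Proof.
  intros Hex Hz. rewrite (Series_incr_n a (S N)) by (auto; lia). simpl pred.
  rewrite (Series_zero (fun k => a (S N + k)%nat)). ring. intro k; apply Hz; lia.
Qed.

Theorem lemma4p3
  (T : nat) (alpha theta : R) (c K : nat -> R) (G F : nat -> R -> R)
  (ED gamma : nat -> R)
  (Cm SU s Ib I Sb : nat -> R) (H : nat -> R -> R) (psi phi : nat -> R -> R -> R)
  (* model *)
  (HT : (2 <= T)%nat)
  (Halpha : 0 < alpha <= 1)
  (HK : forall t, (t < T)%nat -> 0 <= K t)
  (HF : forall t, (t < T)%nat -> nonneg_distribution_function (F t))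
  (HED : forall t, (t < T)%nat -> has_mean (F t) (ED t))
  (Hconv : forall t, (t < T)%nat -> convex_fun (Cfun alpha c G ED t))
  (Hcoer : forall t, (t < T)%nat -> coercive (Cfun alpha c G ED t))
  (HKdec : forall t, (S t < T)%nat -> alpha * K (S t) <= K t)
  (* grid construction *)
  (Htheta : 0 < theta)
  (HCm : forall t, (t < T)%nat ->
     is_min (fun y => forall x, Cfun alpha c G ED t y <= Cfun alpha c G ED t x) (Cm t))
  (HSU : forall t, (t < T)%nat -> forall n0 : Z,
     zg theta n0 < Cm t <= zg theta (n0 + 1) ->
     is_min (fun x => on_grid theta x /\ Cm t <= x /\
               Cfun alpha c G ED t x > Cfun alpha c G ED t (zg theta n0) + K t) (SU t))
  (HsT : s (T - 1)%nat <= Cm (T - 1)%nat /\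
         Cfun alpha c G ED (T - 1)%nat (s (T - 1)%nat)
           = Cfun alpha c G ED (T - 1)%nat (Cm (T - 1)%nat) + K (T - 1)%nat)
  (HIbT : Ib (T - 1)%nat = s (T - 1)%nat)
  (HI : forall t, (S t < T)%nat ->
     is_max (fun x => on_grid theta x /\ x < Rmin (Ib (S t) - theta) (Cm t)) (I t))
  (HIb : forall t, (S t < T)%nat ->
     is_max (fun x => on_grid theta x /\ x <= I t /\
               Cfun alpha c G ED t x > Cfun alpha c G ED t (I t) + K t) (Ib t - theta))
  (HHT : forall y, H (T - 1)%nat y = Cfun alpha c G ED (T - 1)%nat y)
  (HSbT : Sb (T - 1)%nat = Cm (T - 1)%nat)
  (Hfin : forall t, (S t < T)%nat -> forall y,
     ex_series (fun k => Rabs (Hterm theta F H Sb s K t y k)))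
  (HH : forall t, (S t < T)%nat -> forall y,
     H t y = Cfun alpha c G ED t y + alpha * Series (Hterm theta F H Sb s K t y))
  (HSb : forall t, (S t < T)%nat ->
     is_max (fun x => on_grid theta x /\ I t <= x <= SU t /\
               forall w, on_grid theta w -> I t <= w <= SU t -> H t x <= H t w) (Sb t))
  (Hs0 : forall t, (S t < T)%nat -> K t = 0 -> s t = Sb t)
  (Hs : forall t, (S t < T)%nat -> K t <> 0 ->
     is_min (fun x => on_grid theta x /\ Ib t <= x <= Sb t /\
               H t x <= H t (Sb t) + K t) (s t))
  (* Lipschitz constants *)
  (Hgamma : forall t, (t < T)%nat -> 0 <= gamma t)
  (HLip : forall t, (t < T)%nat -> forall x y,
     Rabs (Cfun alpha c G ED t x - Cfun alpha c G ED t y) <= gamma t * Rabs (x - y))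
  (* estimate functions *)
  (HpsiT : forall x y, psi (T - 1)%nat x y = gamma (T - 1)%nat * x)
  (HphiT : forall x y, phi (T - 1)%nat x y =
     if Rlt_dec y (s (T - 1)%nat) then 0 else gamma (T - 1)%nat * x)
  (Hpsi1 : forall t, (S t < T)%nat -> forall x y,
     y < s (S t) - theta -> psi t x y = gamma t * x)
  (Hpsi2 : forall t, (S t < T)%nat -> forall x y, s (S t) - theta <= y ->
     forall n : Z, zg theta (n - 1) <= y - s (S t) < zg theta n ->
     psi t x y = gamma t * x + alpha *
       sum_f_R0 (fun k => phi (S t) x (y - zg theta (Z.of_nat k - 1))
                          * fgrid theta F t (Z.of_nat k - 1)) (Z.to_nat n))
  (Hphi : forall t, (S t < T)%nat -> forall x y,
     phi t x y = if Rlt_dec y (s t) then 0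
                 else if Rlt_dec (y - x) (s t) then psi t (y - s t) y
                 else psi t x y) :
  forall t, (t < T)%nat -> forall x' x, x' <= x ->
    H t x - H t x' <= psi t (x - x') x /\
    Vfun H Sb s K t x - Vfun H Sb s K t x' <= phi t (x - x') x.
Proof.
  assert (Hf : forall t, (t < T)%nat -> forall n, 0 <= fgrid theta F t n).
  { intros t Ht n. unfold fgrid. destruct (HF t Ht) as [Hm _].
    assert (F t (zg theta n) <= F t (zg theta (n+1))).
    { apply Hm. apply zg_mono; [lra|lia]. } lra. }
  assert (HV : forall t, (S t < T)%nat ->
     (forall x' x, x' <= x -> H t x - H t x' <= psi t (x - x') x) ->
     forall x' x, x' <= x -> Vfun H Sb s K t x - Vfun H Sb s K t x' <= phi t (x - x') x).
  { intros t Hst IHH x' x Hxx.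
    assert (Hsb : H t (s t) <= H t (Sb t) + K t).
    { destruct (Req_dec (K t) 0) as [E|E].
      - rewrite (Hs0 t Hst E). lra.
      - destruct (Hs t Hst E) as [[_ [_ P]] _]. exact P. }
    unfold Vfun. rewrite (Hphi t Hst).
    destruct (Rlt_dec x (s t)); destruct (Rlt_dec x' (s t));
      destruct (Rlt_dec (x - (x - x')) (s t)); try lra.
    - pose proof (IHH (s t) x ltac:(lra)). lra.
    - apply IHH; lra. }
  assert (Hmain : forall d, (d < T)%nat -> forall x' x, x' <= x ->
    H (T - 1 - d)%nat x - H (T - 1 - d)%nat x' <= psi (T - 1 - d)%nat (x - x') x /\
    Vfun H Sb s K (T - 1 - d)%nat x - Vfun H Sb s K (T - 1 - d)%nat x'
      <= phi (T - 1 - d)%nat (x - x') x).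
  { induction d as [|d IHd]; intros Hd.
    - replace (T - 1 - 0)%nat with (T - 1)%nat by lia.
      assert (HT1 : (T - 1 < T)%nat) by lia.
      assert (HHx : forall x' x, x' <= x -> H (T-1)%nat x - H (T-1)%nat x' <= gamma (T-1)%nat * (x - x')).
      { intros x' x Hxx. rewrite !HHT. pose proof (HLip _ HT1 x x').
        rewrite (Rabs_right (x - x')) in H0 by lra.
        pose proof (Rle_abs (Cfun alpha c G ED (T - 1) x - Cfun alpha c G ED (T - 1) x')). lra. }
      intros x' x Hxx. split.
      + rewrite HpsiT. apply HHx; exact Hxx.
      + rewrite HphiT. unfold Vfun.
        destruct HsT as [_ HsT2].
        destruct (Rlt_dec x (s (T-1)%nat)); destruct (Rlt_dec x' (s (T-1)%nat)); try lra.
        * pose proof (HHx (s (T-1)%nat) x ltac:(lra)).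
          assert (H (T-1)%nat (s (T-1)%nat) = H (T-1)%nat (Sb (T-1)%nat) + K (T-1)%nat) by (rewrite !HHT, HSbT; exact HsT2).
          assert (gamma (T-1)%nat * (x - s (T-1)%nat) <= gamma (T-1)%nat * (x - x')) by (apply Rmult_le_compat_l; [apply Hgamma; lia|lra]). lra.
        * apply HHx; lra.
    - set (t := (T - 1 - S d)%nat).
      assert (Hst : (S t < T)%nat) by (unfold t; lia).
      assert (Ht : (t < T)%nat) by lia.
      assert (E : S t = (T - 1 - d)%nat) by (unfold t; lia).
      assert (IHV : forall x' x, x' <= x ->
        Vfun H Sb s K (S t) x - Vfun H Sb s K (S t) x' <= phi (S t) (x - x') x).
      { intros. rewrite E. apply (IHd ltac:(lia)); auto. }
      assert (HHc : forall x' x, x' <= x -> H t x - H t x' <= psi t (x - x') x).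
      { intros x' x Hxx.
        rewrite (HH t Hst x), (HH t Hst x').
        assert (Hex : forall y, ex_series (Hterm theta F H Sb s K t y)).
        { intro y. apply ex_series_Rabs. apply Hfin; auto. }
        assert (HC : Cfun alpha c G ED t x - Cfun alpha c G ED t x' <= gamma t * (x - x')).
        { pose proof (HLip t Ht x x'). rewrite (Rabs_right (x - x')) in H0 by lra.
          pose proof (Rle_abs (Cfun alpha c G ED t x - Cfun alpha c G ED t x')). lra. }
        set (dlt := fun k => Hterm theta F H Sb s K t x k - Hterm theta F H Sb s K t x' k).
        assert (Hser : Series (Hterm theta F H Sb s K t x) - Series (Hterm theta F H Sb s K t x')
                       = Series dlt).
        { unfold dlt. rewrite Series_minus; auto. }
        assert (Hexd : ex_series dlt) by (apply ex_minus; auto).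
        assert (Hzero : forall k, x - zg theta (Z.of_nat k - 1) < s (S t) -> dlt k = 0).
        { intros k Hk. unfold dlt, Hterm, Vfun.
          destruct (Rlt_dec (x - zg theta (Z.of_nat k - 1)) (s (S t))); [|lra].
          destruct (Rlt_dec (x' - zg theta (Z.of_nat k - 1)) (s (S t))); [ring|lra]. }
        assert (Hbound : forall k, dlt k <= phi (S t) (x - x') (x - zg theta (Z.of_nat k - 1))
                                    * fgrid theta F t (Z.of_nat k - 1)).
        { intro k. unfold dlt, Hterm. rewrite <- Rmult_minus_distr_r.
          apply Rmult_le_compat_r; [apply Hf; exact Ht|].
          replace (x - x') with ((x - zg theta (Z.of_nat k - 1)) - (x' - zg theta (Z.of_nat k - 1))) by ring.
          apply IHV. lra. }
        replace (Cfun alpha c G ED t x + alpha * Series (Hterm theta F H Sb s K t x) -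
          (Cfun alpha c G ED t x' + alpha * Series (Hterm theta F H Sb s K t x')))
          with (Cfun alpha c G ED t x - Cfun alpha c G ED t x' +
                alpha * (Series (Hterm theta F H Sb s K t x) - Series (Hterm theta F H Sb s K t x')))
          by ring.
        rewrite Hser.
        destruct (Rlt_dec x (s (S t) - theta)) as [Hlo|Hhi].
        - rewrite (Hpsi1 t Hst _ _ Hlo).
          rewrite (Series_zero dlt). lra.
          intro k. apply Hzero.
          pose proof (zg_mono theta (-1) (Z.of_nat k - 1) Htheta ltac:(lia)).
          rewrite zg_m1 in H0. lra.
        - apply Rnot_lt_le in Hhi.
          set (r := (x - s (S t)) / theta).
          assert (Hr : r * theta = x - s (S t)) by (unfold r; field; lra).
          destruct (archimed r) as [A1 A2].
          set (n := up r) in *.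
          assert (Hn1 : zg theta (n - 1) <= x - s (S t) < zg theta n).
          { unfold zg. rewrite minus_IZR. split.
            - rewrite <- Hr. apply Rmult_le_compat_r; simpl; lra.
            - rewrite <- Hr. apply Rmult_lt_compat_r; lra. }
          assert (Hrm1 : -1 <= r).
          { apply (Rmult_le_reg_r theta); [lra|]. rewrite Hr. lra. }
          assert (Hn0 : (0 <= n)%Z).
          { assert (-1 < n)%Z. { apply lt_IZR. change (IZR (-1)) with (-1). lra. } lia. }
          rewrite (Hpsi2 t Hst (x - x') x Hhi n Hn1).
          rewrite (Series_fin dlt (Z.to_nat n) Hexd).
          + assert (sum_f_R0 dlt (Z.to_nat n) <= sum_f_R0 (fun k => phi (S t) (x - x') (x - zg theta (Z.of_nat k - 1))
                          * fgrid theta F t (Z.of_nat k - 1)) (Z.to_nat n)).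
            { apply sum_Rle. intros; apply Hbound. }
            assert (alpha * sum_f_R0 dlt (Z.to_nat n) <= alpha * sum_f_R0 (fun k => phi (S t) (x - x') (x - zg theta (Z.of_nat k - 1))
                          * fgrid theta F t (Z.of_nat k - 1)) (Z.to_nat n)).
            { apply Rmult_le_compat_l; lra. }
            lra.
          + intros k Hk. apply Hzero.
            pose proof (zg_mono theta n (Z.of_nat k - 1) Htheta ltac:(lia)). lra. }
      unfold t in HHc, Hst. split.
      + apply HHc; auto.
      + apply HV; auto. }
  intros t Ht x' x Hxx.
  pose proof (Hmain (T - 1 - t)%nat ltac:(lia) x' x Hxx) as Hm.
  replace (T - 1 - (T - 1 - t))%nat with t in Hm by lia. exact Hm.
Qed.
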